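(* Let $\lambda>0$, $X\in\mathbb R^{\mathbf m\times\mathbf n}$, and define on $\mathbb R^{\mathbf m\times\mathbf r}\times\mathbb R^{\mathbf r\times\mathbf n}$ $$f(U,V)=\tfrac12\|X-UV\|_F^2+\tfrac{\lambda}{2}\|I_{\mathbf r}-VV^\top\|_F^2,\quad \varphi_1(U,V)=\tfrac12\|U\|_F^2,\quad \varphi_2(U,V)=\tfrac{6\lambda}{4}\|V\|_F^4+\tfrac12\varepsilon(U)\|V\|_F^2,$$ with $\varepsilon(U)=\max\{\|U^\top U\|,2\lambda\}$ ($\|\cdot\|$ the spectral norm). (1) For any $\bar U\in\mathbb R^{\mathbf m\times\mathbf r}$, $V\in\mathbb R^{\mathbf r\times\mathbf n}$ and $L_1>0$, $$\arg\min_{U\ge0}\Big\{\langle\nabla_Uf(\bar U,V),U\rangle+L_1D_{\varphi_1(\cdot,V)}(U,\bar U)\Big\}=\max\Big(\bar U-\tfrac1{L_1}\big(\bar UVV^\top-XV^\top\big),0\Big).$$ (2) For any $\bar V\in\mathbb R^{\mathbf r\times\mathbf n}$, $U\in\mathbb R^{\mathbf m\times\mathbf r}$ and $L_2>0$, $$\arg\min_{V\ge0}\Big\{\langle\nabla_Vf(U,\bar V),V\rangle+L_2D_{\varphi_2(U,\cdot)}(V,\bar V)\Big\}=\tfrac1\rho\max(G(\bar V),0),$$ where $$G(\bar V)=\nabla_V\varphi_2(U,\bar V)-\tfrac1{L_2}\nabla_Vf(U,\bar V)=(6\lambda\|\bar V\|_F^2+\varepsilon(U))\bar V-\tfrac1{L_2}\big(U^\top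 U\bar V-U^\top X+2\lambda(\bar V\bar V^\top\bar V-\bar V)\big),$$ and $\rho$ is the unique real solution of $\rho^2(\rho-a)=c$ with $a=\varepsilon(U)$ and $c=6\lambda\|\max(G(\bar V),0)\|_F^2$, which is given in closed form by $$\rho=\frac a3+\sqrt[3]{\frac{c+\sqrt\Delta}{2}+\frac{a^3}{27}}+\sqrt[3]{\frac{c-\sqrt\Delta}{2}+\frac{a^3}{27}},\qquad \Delta=c^2+\tfrac4{27}ca^3.$$
   Context: Inner products are Frobenius (trace) inner products; $U\ge0$, $V\ge0$ denote entrywise nonnegativity; $\max(\cdot,0)$ is taken entrywise. For a differentiable convex $\psi$, the Bregman divergence is $D_\psi(x,y)=\psi(x)-\psi(y)-\langle\nabla\psi(y),x-y\rangle$; here $D_{\varphi_1(\cdot,V)}$ is the divergence of $U\mapsto\varphi_1(U,V)$ and $D_{\varphi_2(U,\cdot)}$ that of $V\mapsto\varphi_2(U,V)$. *)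

(* Defs.v *)
From HB Require Import structures.
From mathcomp Require Import all_boot all_order all_algebra.
From mathcomp Require Import all_classical all_reals all_analysis.
Set Implicit Arguments. Unset Strict Implicit. Unset Printing Implicit Defensive.
Import Order.TTheory GRing.Theory Num.Theory.
Local Open Scope ring_scope.
Local Open Scope classical_set_scope.

Section Defs.
Variable R : realType.

Definition frob (p q : nat) (A B : 'M[R]_(p, q)) : R :=
  \sum_(i < p) \sum_(j < q) A i j * B i j.

Definition fnorm (p q : nat) (A : 'M[R]_(p, q)) : R := Num.sqrt (frob A A).

Definition specnorm (p q : nat) (A : 'M[R]_(p, q)) : R :=
  sup [set fnorm (A *m x) | x in [set x : 'cV[R]_q | fnorm x <= 1]].

Definition mx_nonneg (p q : nat) (A : 'M[R]_(p, q)) : Prop :=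
  forall i j, 0 <= A i j.
Definition mx_pos (p q : nat) (A : 'M[R]_(p, q)) : 'M[R]_(p, q) :=
  map_mx (fun x => Num.max x 0) A.

Definition grad (p q : nat) (psi : 'M[R]_(p, q) -> R) (Y : 'M[R]_(p, q))
  : 'M[R]_(p, q) :=
  \matrix_(i, j) derive1 (fun t : R => psi (Y + t *: delta_mx i j)) 0.

Definition bregman (p q : nat) (psi : 'M[R]_(p, q) -> R) (x y : 'M[R]_(p, q))
  : R := psi x - psi y - frob (grad psi y) (x - y).

Definition argmin_nonneg (p q : nat) (obj : 'M[R]_(p, q) -> R)
  : set 'M[R]_(p, q) :=
  [set Z | mx_nonneg Z /\ forall W, mx_nonneg W -> obj Z <= obj W].

Definition cbrt (x : R) : R :=
  if 0 <= x then x `^ (3%:R)^-1 else - ((- x) `^ (3%:R)^-1).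

Definition fobj (m r n : nat) (lam : R) (X : 'M[R]_(m, n))
  (U : 'M[R]_(m, r)) (V : 'M[R]_(r, n)) : R :=
  2^-1 * fnorm (X - U *m V) ^+ 2
  + lam / 2 * fnorm (1%:M - V *m V^T) ^+ 2.

Definition eps (m r : nat) (lam : R) (U : 'M[R]_(m, r)) : R :=
  Num.max (specnorm (U^T *m U)) (2 * lam).

Definition phi1 (m r n : nat) (U : 'M[R]_(m, r)) (V : 'M[R]_(r, n)) : R :=
  2^-1 * fnorm U ^+ 2.

Definition phi2 (m r n : nat) (lam : R) (U : 'M[R]_(m, r)) (V : 'M[R]_(r, n))
  : R :=
  (6%:R * lam) / 4%:R * fnorm V ^+ 4 + 2^-1 * eps lam U * fnorm V ^+ 2.

End Defs.

(* Main.v *)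
Require Import Defs.
From mathcomp Require Import all_boot all_order all_algebra.
From mathcomp Require Import all_classical all_reals all_analysis.
From mathcomp Require Import ring lra.
Import Order.TTheory GRing.Theory Num.Theory.
Local Open Scope ring_scope.
Local Open Scope classical_set_scope.

Set Implicit Arguments. Unset Strict Implicit. Unset Printing Implicit Defensive.
Section S.
Variable R : realType.
Implicit Types (p q : nat).

Lemma frob_tr p q (A B : 'M[R]_(p, q)) : frob A B = \tr (A^T *m B).
Proof.
rewrite /frob /mxtrace exchange_big /=; apply: eq_bigr => j _.
by rewrite mxE; apply: eq_bigr => i _; rewrite mxE.
Qed.

Lemma frobC p q (A B : 'M[R]_(p, q)) : frob A B = frob B A.
Proof. by rewrite /frob; apply: eq_bigr => i _; apply: eq_bigr => j _; rewrite mulrC. Qed.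

Lemma frobDl p q (A B C : 'M[R]_(p, q)) : frob (A + B) C = frob A C + frob B C.
Proof.
rewrite /frob -big_split; apply: eq_bigr => i _.
by rewrite -big_split; apply: eq_bigr => j _; rewrite mxE mulrDl.
Qed.

Lemma frobZl p q k (A B : 'M[R]_(p, q)) : frob (k *: A) B = k * frob A B.
Proof.
rewrite /frob mulr_sumr; apply: eq_bigr => i _.
by rewrite mulr_sumr; apply: eq_bigr => j _; rewrite mxE mulrA.
Qed.

Lemma frobNl p q (A B : 'M[R]_(p, q)) : frob (- A) B = - frob A B.
Proof. by rewrite -scaleN1r frobZl mulN1r. Qed.

Lemma frobDr p q (A B C : 'M[R]_(p, q)) : frob C (A + B) = frob C A + frob C B.
Proof. by rewrite frobC frobDl !(frobC C). Qed.
Lemma frobZr p q k (A B : 'M[R]_(p, q)) : frob B (k *: A) = k * frob B A.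
Proof. by rewrite frobC frobZl frobC. Qed.
Lemma frobNr p q (A B : 'M[R]_(p, q)) : frob B (- A) = - frob B A.
Proof. by rewrite frobC frobNl frobC. Qed.
Lemma frobBl p q (A B C : 'M[R]_(p, q)) : frob (A - B) C = frob A C - frob B C.
Proof. by rewrite frobDl frobNl. Qed.
Lemma frobBr p q (A B C : 'M[R]_(p, q)) : frob C (A - B) = frob C A - frob C B.
Proof. by rewrite frobDr frobNr. Qed.

Lemma frob_mull p q s (A : 'M[R]_(p, q)) (B : 'M[R]_(p, s)) (C : 'M[R]_(s, q)) :
  frob A (B *m C) = frob (B^T *m A) C.
Proof. by rewrite !frob_tr trmx_mul trmxK mulmxA. Qed.

Lemma frob_mulr p q s (A : 'M[R]_(p, q)) (B : 'M[R]_(p, s)) (C : 'M[R]_(s, q)) :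
  frob A (B *m C) = frob (A *m C^T) B.
Proof. by rewrite !frob_tr trmx_mul trmxK mulmxA mxtrace_mulC mulmxA. Qed.

Lemma frob_tr_tr p q (A B : 'M[R]_(p, q)) : frob A^T B^T = frob A B.
Proof. by rewrite /frob exchange_big /=; apply: eq_bigr => i _; apply: eq_bigr => j _; rewrite !mxE. Qed.

Lemma frob_delta p q (A : 'M[R]_(p, q)) i j : frob A (delta_mx i j) = A i j.
Proof.
rewrite /frob (bigD1 i) //= (bigD1 j) //= big1 ?big1 ?addr0.
- by rewrite mxE !eqxx mulr1.
- move=> k hk; apply: big1 => l _; rewrite mxE (negbTE hk) mulr0 //.
- by move=> l hl; rewrite mxE eqxx (negbTE hl) mulr0.
Qed.

Lemma frob_ge0 p q (A : 'M[R]_(p, q)) : 0 <= frob A A.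
Proof. by apply: sumr_ge0 => i _; apply: sumr_ge0 => j _; rewrite -expr2 sqr_ge0. Qed.

Lemma fnorm2 p q (A : 'M[R]_(p, q)) : fnorm A ^+ 2 = frob A A.
Proof. by rewrite /fnorm sqr_sqrtr // frob_ge0. Qed.

Lemma frob_eq0 p q (A : 'M[R]_(p, q)) : frob A A = 0 -> A = 0.
Proof.
rewrite /frob => h0; apply/matrixP => i j; rewrite mxE.
have h1 := psumr_eq0P (fun i _ => sumr_ge0 _ (fun j _ => sqr_ge0 (A i j))) h0.
have h2 := psumr_eq0P (fun j _ => sqr_ge0 (A i j)) (h1 i isT).
by have /eqP := h2 j isT; rewrite sqrf_eq0 => /eqP.
Qed.

Lemma delta_frob p q i j : frob (delta_mx i j : 'M[R]_(p,q)) (delta_mx i j) = 1.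
Proof. by rewrite frob_delta mxE !eqxx. Qed.


Lemma derive_poly4 (f : R -> R) (a b c d e : R) :
  (forall t, f t = a + b * t + t ^+ 2 * (c + t * (d + t * e))) ->
  derive1 f 0 = b.
Proof.
move=> hf.
pose p : {poly R} := a%:P + b%:P * 'X + 'X^2 * (c%:P + 'X * (d%:P + 'X * e%:P)).
have -> : f = horner p.
  by apply/funext => t; rewrite hf /p !hornerE.
rewrite -derivE horner_coef0 coef_deriv /p.
rewrite !coefD coefC /= coefCM coefX /= mulr1 coefXnM /=.
by rewrite addr0 add0r.
Qed.

Lemma mxDE p q (A B : 'M[R]_(p,q)) i j : (A + B) i j = A i j + B i j.
Proof. by rewrite mxE. Qed.
Lemma mxNE p q (A : 'M[R]_(p,q)) i j : (- A) i j = - A i j.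
Proof. by rewrite mxE. Qed.
Lemma mxBE p q (A B : 'M[R]_(p,q)) i j : (A - B) i j = A i j - B i j.
Proof. by rewrite !mxE. Qed.
Lemma mxZE p q k (A : 'M[R]_(p,q)) i j : (k *: A) i j = k * A i j.
Proof. by rewrite mxE. Qed.

Lemma frob_quad1 p q (A B : 'M[R]_(p, q)) t :
  frob (A + t *: B) (A + t *: B) = frob A A + 2 * t * frob A B + t ^+ 2 * frob B B.
Proof.
rewrite !frobDl !frobDr !frobZl !frobZr (frobC B A); ring.
Qed.

Lemma frob_quad2 p q (A B C : 'M[R]_(p, q)) t :
  frob (A + t *: B + t ^+ 2 *: C) (A + t *: B + t ^+ 2 *: C) =
  frob A A + (2 * frob A B) * t
  + t ^+ 2 * (frob B B + 2 * frob A C + t * (2 * frob B C + t * frob C C)).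
Proof.
rewrite !frobDl !frobDr !frobZl !frobZr (frobC B A) (frobC C A) (frobC C B); ring.
Qed.

Lemma grad_phi1 m r n (Ub : 'M[R]_(m, r)) (V : 'M[R]_(r, n)) :
  grad (fun U' => phi1 U' V) Ub = Ub.
Proof.
apply/matrixP => i j; rewrite mxE.
apply: (derive_poly4 (a := 2^-1 * frob Ub Ub) (c := 2^-1) (d := 0) (e := 0)) => t.
rewrite /phi1 fnorm2 frob_quad1 frob_delta delta_frob; by field.
Qed.

Lemma grad_fobjU m r n lam (X : 'M[R]_(m, n)) (Ub : 'M[R]_(m, r)) (V : 'M[R]_(r, n)) :
  grad (fun U' => fobj lam X U' V) Ub = Ub *m V *m V^T - X *m V^T.
Proof.
apply/matrixP => i j; rewrite mxE.
set E := delta_mx i j.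
have hM t : X - (Ub + t *: E) *m V = (X - Ub *m V) + t *: (- (E *m V)).
  by rewrite mulmxDl -scalemxAl scalerN opprD addrA.
apply: (derive_poly4 (a := 2^-1 * frob (X - Ub *m V) (X - Ub *m V)
          + lam / 2 * fnorm (1%:M - V *m V^T) ^+ 2)
   (c := 2^-1 * frob (E *m V) (E *m V)) (d := 0) (e := 0)) => t.
rewrite /fobj fnorm2 hM frob_quad1 frobNr frobNl frobNr opprK.
rewrite frob_mulr /E frob_delta mulmxBl !mxBE.
by field.
Qed.


Lemma grad_fobjV m r n lam (X : 'M[R]_(m, n)) (U : 'M[R]_(m, r)) (Vb : 'M[R]_(r, n)) :
  grad (fun V' => fobj lam X U V') Vb =
  U^T *m U *m Vb - U^T *m X + (2 * lam) *: (Vb *m Vb^T *m Vb - Vb).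
Proof.
apply/matrixP => i j; rewrite mxE.
set E := delta_mx i j.
set Rr := X - U *m Vb.
set B1 := - (U *m E).
set S := 1%:M - Vb *m Vb^T.
set K := - (E *m Vb^T + Vb *m E^T).
set F := - (E *m E^T).
have hM1 t : X - U *m (Vb + t *: E) = Rr + t *: B1.
  by rewrite mulmxDr -scalemxAr /Rr /B1 scalerN opprD addrA.
have hM2 t : 1%:M - (Vb + t *: E) *m (Vb + t *: E)^T = S + t *: K + t ^+ 2 *: F.
  rewrite linearD linearZ /= mulmxDl !mulmxDr -!scalemxAl -!scalemxAr scalerA /S /K /F.
  move: (Vb *m Vb^T) (E *m Vb^T) (Vb *m E^T) (E *m E^T) => A B C D.
  by apply/matrixP => k l; rewrite !mxE; ring.
have h1 : frob Rr B1 = (U^T *m U *m Vb - U^T *m X) i j.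
  rewrite /B1 frobNr frob_mull /E frob_delta /Rr mulmxBr mulmxA !mxBE; ring.
have hS : S^T = S by rewrite /S linearB /= trmx1 trmx_mul trmxK.
have h2 : frob S K = - 2 * (S *m Vb) i j.
  rewrite /K frobNr frobDr (frob_mulr _ E) trmxK /E frob_delta.
  rewrite (frob_mull _ Vb) -frob_tr_tr trmx_mul trmxK hS !trmxK frob_delta; ring.
have h3 : (S *m Vb) i j = - (Vb *m Vb^T *m Vb - Vb) i j.
  by rewrite /S mulmxBl mul1mx !mxBE; ring.
apply: (derive_poly4 (a := 2^-1 * frob Rr Rr + lam / 2 * frob S S)
   (c := 2^-1 * frob B1 B1 + lam / 2 * (frob K K + 2 * frob S F))
   (d := lam / 2 * (2 * frob K F)) (e := lam / 2 * frob F F)) => t.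
rewrite /fobj !fnorm2 hM1 hM2 frob_quad1 frob_quad2 h1 h2 h3 !mxDE mxZE !mxBE !mxNE.
by field.
Qed.

Lemma grad_phi2 m r n lam (U : 'M[R]_(m, r)) (Vb : 'M[R]_(r, n)) :
  grad (fun V' => phi2 lam U V') Vb =
  (6%:R * lam * fnorm Vb ^+ 2 + eps lam U) *: Vb.
Proof.
apply/matrixP => i j; rewrite mxE mxZE.
set a := eps lam U.
set s := frob Vb Vb.
set v := Vb i j.
have hq t : frob (Vb + t *: delta_mx i j) (Vb + t *: delta_mx i j) = s + 2 * t * v + t ^+ 2.
  by rewrite frob_quad1 frob_delta delta_frob mulr1.
have h4 (A : 'M[R]_(r, n)) : fnorm A ^+ 4 = frob A A ^+ 2.
  by rewrite -fnorm2 -exprM.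
apply: (derive_poly4 (a := 6%:R * lam / 4%:R * s ^+ 2 + 2^-1 * a * s)
   (c := 6%:R * lam / 4%:R * (4%:R * v ^+ 2 + 2 * s) + 2^-1 * a)
   (d := 6%:R * lam / 4%:R * (4%:R * v)) (e := 6%:R * lam / 4%:R)) => t.
rewrite /phi2 h4 fnorm2 hq fnorm2 -/s -/a.
by field.
Qed.

Lemma mx_pos_nonneg p q (Y : 'M[R]_(p, q)) : mx_nonneg (mx_pos Y).
Proof. by move=> i j; rewrite mxE le_max lexx orbT. Qed.

Lemma compl_ge0 p q (Y W : 'M[R]_(p, q)) k : 0 <= k -> mx_nonneg W ->
  0 <= frob (mx_pos Y - Y) (W - k *: mx_pos Y).
Proof.
move=> hk hW; apply: sumr_ge0 => i _; apply: sumr_ge0 => j _.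
rewrite !mxE; have := hW i j; case: (leP (Y i j) 0) => hy hw.
  by apply: mulr_ge0; lra.
by rewrite subrr mul0r.
Qed.

Lemma argmin_uniq p q (obj qf : 'M[R]_(p, q) -> R) (L K mu : R) (Z : 'M[R]_(p, q)) :
  0 < L -> 0 < mu -> mx_nonneg Z ->
  (forall W, obj W = L * qf W + K) ->
  (forall W, mx_nonneg W -> mu * frob (W - Z) (W - Z) <= qf W - qf Z) ->
  argmin_nonneg obj = [set Z].
Proof.
move=> hL hmu hZ hobj hq; apply/seteqP; split => W /=.
  move=> [hW hmin]; have := hmin Z hZ; rewrite !hobj => h1.
  have h2 : qf W <= qf Z.
    by rewrite -(ler_pM2l hL); lra.
  have := hq W hW; have := frob_ge0 (W - Z) => h3 h4.
  have h5 : frob (W - Z) (W - Z) = 0.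
    apply/eqP; rewrite eq_le h3 andbT.
    by rewrite -(ler_pM2l hmu) mulr0; lra.
  by have := frob_eq0 h5 => /eqP; rewrite subr_eq0 => /eqP.
move=> ->; split => // W' hW'; rewrite !hobj lerD2r ler_pM2l //.
have := hq W' hW'; have := frob_ge0 (W' - Z) => h3 h4.
have : 0 <= mu * frob (W' - Z) (W' - Z) by rewrite mulr_ge0 // ltW.
lra.
Qed.

Lemma part1 m r n lam (X : 'M[R]_(m, n)) (Ubar : 'M[R]_(m, r)) (V : 'M[R]_(r, n)) L1 :
  0 < L1 ->
  argmin_nonneg (fun U : 'M[R]_(m, r) =>
         frob (grad (fun U' => fobj lam X U' V) Ubar) U
         + L1 * bregman (fun U' => phi1 U' V) U Ubar)
     = [set mx_pos (Ubar - L1^-1 *: (Ubar *m V *m V^T - X *m V^T))].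
Proof.
move=> hL; rewrite grad_fobjU.
set g := Ubar *m V *m V^T - X *m V^T.
set Y := Ubar - L1^-1 *: g.
have hg : g = L1 *: (Ubar - Y).
  by rewrite /Y opprD addrA subrr add0r opprK scalerA mulfV ?gt_eqF // scale1r.
apply: (argmin_uniq (qf := fun W => 2^-1 * frob W W - frob Y W) (L := L1)
   (K := L1 * (2^-1 * frob Ubar Ubar)) (mu := 2^-1)).
- exact: hL.
- by rewrite invr_gt0 ltr0n.
- exact: mx_pos_nonneg.
- move=> W; rewrite /bregman grad_phi1 /phi1 !fnorm2 hg.
  rewrite frobZl !frobBl !frobBr; by field.
- move=> W hW.
  have := compl_ge0 Y (k := 1) ler01 hW; rewrite scale1r.
  set Z := mx_pos Y.
  rewrite !frobBl !frobBr (frobC W Z) => h.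
  lra.
Qed.
Lemma cbrtK (x : R) : cbrt x ^+ 3 = x.
Proof.
have h (y : R) : 0 <= y -> (y `^ (3%:R)^-1) ^+ 3 = y.
  move=> hy; rewrite -powR_mulrn ?powR_ge0 // -powRrM mulVf ?pnatr_eq0 //.
  by rewrite powRr1.
rewrite /cbrt; case: ifP => hx; first exact: h.
have hx' : 0 <= - x by rewrite oppr_ge0 ltW // ltNge hx.
have -> : (- ((- x) `^ (3%:R)^-1)) ^+ 3 = - (((- x) `^ (3%:R)^-1) ^+ 3) by ring.
by rewrite h // opprK.
Qed.

Lemma cube_le0 (u : R) : u <= 0 -> u ^+ 3 <= 0.
Proof.
move=> hu; rewrite exprS mulr_le0_ge0 //; exact: sqr_ge0.
Qed.

Lemma cube_inj_pos (x w : R) : 0 < w -> x ^+ 3 = w ^+ 3 -> x = w.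
Proof.
move=> hw hx.
have : (x - w) * ((x + w / 2) ^+ 2 + 3%:R / 4%:R * w ^+ 2) = 0.
  have -> : (x - w) * ((x + w / 2) ^+ 2 + 3%:R / 4%:R * w ^+ 2) = x ^+ 3 - w ^+ 3 by field.
  by rewrite hx subrr.
move/eqP; rewrite mulf_eq0 => /orP [/eqP h|/eqP h].
  by apply/eqP; rewrite -subr_eq0 h.
have : 0 < (x + w / 2) ^+ 2 + 3%:R / 4%:R * w ^+ 2.
  apply: ltr_wpDl; first exact: sqr_ge0.
  by apply: mulr_gt0; [apply: divr_gt0; rewrite ltr0n | exact: exprn_gt0].
by rewrite h ltxx.
Qed.

Lemma cardano (a c : R) : 0 < a -> 0 <= c ->
  let Delta := c ^+ 2 + 4%:R / 27%:R * c * a ^+ 3 in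
  let rho := a / 3%:R
                + cbrt ((c + Num.sqrt Delta) / 2 + a ^+ 3 / 27%:R)
                + cbrt ((c - Num.sqrt Delta) / 2 + a ^+ 3 / 27%:R) in
  0 < rho /\ rho ^+ 2 * (rho - a) = c.
Proof.
move=> ha hc Delta rho.
have ha3 : 0 < a ^+ 3 by exact: exprn_gt0.
have hD : 0 <= Delta.
  rewrite /Delta; apply: addr_ge0; first exact: sqr_ge0.
  apply: mulr_ge0; last exact: ltW.
  by apply: mulr_ge0 => //; apply: divr_ge0; rewrite ler0n.
set sD := Num.sqrt Delta.
have hsD : sD ^+ 2 = Delta by rewrite /sD sqr_sqrtr.
have hsD0 : 0 <= sD by rewrite /sD sqrtr_ge0.
set P := (c + sD) / 2 + a ^+ 3 / 27%:R.
set Q := (c - sD) / 2 + a ^+ 3 / 27%:R.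
set u := cbrt P.
set v := cbrt Q.
have hu : u ^+ 3 = P by exact: cbrtK.
have hv : v ^+ 3 = Q by exact: cbrtK.
have hPQ : P * Q = (a ^+ 2 / 9%:R) ^+ 3.
  have e : P * Q - (a ^+ 2 / 9%:R) ^+ 3 = (Delta - sD ^+ 2) / 4%:R.
    by rewrite /P /Q /Delta; field.
  by apply/eqP; rewrite -subr_eq0 e hsD subrr mul0r.
have hP : 0 < P.
  rewrite /P; apply: ltr_wpDl; last by apply: divr_gt0; rewrite ?ltr0n.
  by apply: divr_ge0 => //; apply: addr_ge0.
have hu0 : 0 < u.
  rewrite ltNge; apply/negP => /cube_le0; rewrite hu => h.
  by have := lt_le_trans hP h; rewrite ltxx.
have huv : u * v = a ^+ 2 / 9%:R.
  apply: cube_inj_pos; first by apply: divr_gt0; rewrite ?exprn_gt0 ?ltr0n.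
  by rewrite exprMn hu hv hPQ.
have erho : rho = a / 3%:R + u + v by [].
have hv0 : 0 < v.
  have : 0 < u * v by rewrite huv; apply: divr_gt0; rewrite ?exprn_gt0 ?ltr0n.
  by rewrite pmulr_rgt0.
split.
  rewrite erho.
  have : 0 < a / 3%:R by apply: divr_gt0; rewrite ?ltr0n.
  lra.
rewrite erho.
have e : (a / 3%:R + u + v) ^+ 2 * (a / 3%:R + u + v - a) - c =
   (u ^+ 3 - P) + (v ^+ 3 - Q) + 3%:R * (u + v) * (u * v - a ^+ 2 / 9%:R).
  by rewrite /P /Q; field.
apply/eqP; rewrite -subr_eq0 e hu hv huv !subrr; apply/eqP; ring.
Qed.

Lemma cubic_uniq (a c rho s : R) : 0 < a -> 0 <= c -> 0 < rho ->
  rho ^+ 2 * (rho - a) = c -> s ^+ 2 * (s - a) = c -> s = rho \/ (c = 0 /\ s = 0).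
Proof.
move=> ha hc hr hrho hs.
have key : (s - rho) * (s * (s - a) + rho * (rho - a) + s * rho) = 0.
  have -> : (s - rho) * (s * (s - a) + rho * (rho - a) + s * rho)
          = s ^+ 2 * (s - a) - rho ^+ 2 * (rho - a) by ring.
  by rewrite hs hrho subrr.
have [c0|cpos] := eqVneq c 0.
  have hra : rho = a.
    move: hrho; rewrite c0 => /eqP; rewrite mulf_eq0 expf_eq0 /= (gt_eqF hr) /=.
    by rewrite subr_eq0 => /eqP.
  move: hs; rewrite c0 => /eqP; rewrite mulf_eq0 expf_eq0 /= subr_eq0 => /orP [/eqP hs0|/eqP hsa].
    by right.
  by left; rewrite hsa hra.
have cp : 0 < c by rewrite lt_def cpos hc.
left.
have gt (x : R) : x ^+ 2 * (x - a) = c -> a < x.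
  move=> hx; rewrite ltNge; apply/negP => hxa.
  have : x ^+ 2 * (x - a) <= 0 by apply: mulr_ge0_le0; [exact: sqr_ge0 | lra].
  by rewrite hx => h; have := lt_le_trans cp h; rewrite ltxx.
have hsa := gt s hs; have hra := gt rho hrho.
move/eqP: key; rewrite mulf_eq0 => /orP [/eqP h|/eqP h].
  by apply/eqP; rewrite -subr_eq0 h.
have : 0 < s * (s - a) + rho * (rho - a) + s * rho.
  apply: addr_gt0; first apply: addr_gt0.
  - by apply: mulr_gt0; lra.
  - by apply: mulr_gt0; lra.
  - by apply: mulr_gt0; lra.
by rewrite h ltxx.
Qed.

Lemma part2_argmin m r n lam (X : 'M[R]_(m, n)) (U : 'M[R]_(m, r)) (Vbar : 'M[R]_(r, n))
   L2 (G : 'M[R]_(r, n)) rho :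
  0 < lam -> 0 < L2 -> 0 < rho ->
  G = grad (fun V' => phi2 lam U V') Vbar - L2^-1 *: grad (fun V' => fobj lam X U V') Vbar ->
  rho ^+ 2 * (rho - eps lam U) = 6%:R * lam * fnorm (mx_pos G) ^+ 2 ->
  argmin_nonneg (fun V : 'M[R]_(r, n) =>
         frob (grad (fun V' => fobj lam X U V') Vbar) V
         + L2 * bregman (fun V' => phi2 lam U V') V Vbar)
     = [set rho^-1 *: mx_pos G].
Proof.
move=> hl hL hr hG hc.
have ha : 0 < eps lam U.
  by rewrite /eps lt_max; apply/orP; right; rewrite mulr_gt0.
set a := eps lam U in hc ha *.
set gf := grad (fun V' => fobj lam X U V') Vbar in hG *.
set gp := grad (fun V' => phi2 lam U V') Vbar in hG *.
have hphi (W : 'M[R]_(r, n)) : phi2 lam U W = 6%:R * lam / 4%:R * frob W W ^+ 2 + 2^-1 * a * frob W W.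
  by rewrite /phi2 -fnorm2 -exprM.
apply: (argmin_uniq (qf := fun W => 6%:R * lam / 4%:R * frob W W ^+ 2 + 2^-1 * a * frob W W - frob G W)
   (L := L2) (K := L2 * (frob gp Vbar - phi2 lam U Vbar)) (mu := 2^-1 * a)).
- exact: hL.
- by rewrite mulr_gt0 // invr_gt0 ltr0n.
- by move=> i j; rewrite mxE; apply: mulr_ge0; [rewrite invr_ge0 ltW | exact: mx_pos_nonneg].
- move=> W; rewrite /bregman -/gp (hphi W) hG frobBl frobZl !frobBr.
  by field; rewrite gt_eqF.
- move=> W hW.
  have hrinv : 0 < rho^-1 by rewrite invr_gt0.
  have := compl_ge0 G (k := rho^-1) (ltW ((eq_rect _ _ hr _ (esym (invr_gt0 rho))))) hW.
  set Z := rho^-1 *: mx_pos G.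
  have hPZ : mx_pos G = rho *: Z by rewrite /Z scalerA mulfV ?gt_eqF // scale1r.
  rewrite hPZ => hE; clearbody Z.
  have hs : rho - a = 6%:R * lam * frob Z Z.
    move: hc; rewrite fnorm2 hPZ frobZl frobZr => hc'.
    have : rho ^+ 2 * (rho - a - 6%:R * lam * frob Z Z) = 0.
      by rewrite mulrBr hc'; ring.
    move/eqP; rewrite mulf_eq0 expf_eq0 /= (gt_eqF hr) /= subr_eq0 => /eqP //.
  have hp := frob_ge0 (W - Z).
  have hw := frob_ge0 W.
  have hs0 := frob_ge0 Z.
  rewrite !frobBl !frobBr !frobZl (frobC W Z) in hE hp *.
  move: hE hp hw hs0 hs.
  move: (frob W W) (frob Z Z) (frob Z W) (frob G W) (frob G Z) => w s p gW gZ hE hp hw hs0 hs.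
  have hrho : rho = a + 6%:R * lam * s by lra.
  rewrite hrho in hE.
  have h1 : 0 <= (6%:R * lam / 4%:R) * ((w - s) ^+ 2 + 2 * s * (s + w - 2 * p)).
    apply: mulr_ge0; first by apply: divr_ge0; [apply: mulr_ge0; [rewrite ler0n|exact: ltW]|rewrite ler0n].
    apply: addr_ge0; first exact: sqr_ge0.
    apply: mulr_ge0; first by apply: mulr_ge0.
    have -> : s + w - 2 * p = w - p - (p - s) by ring.
    exact: hp.

  lra.
Qed.
End S.

Unset Implicit Arguments. Set Strict Implicit.

Theorem proposition5p2 (R : realType) (m r n : nat) (lam : R)
  (X : 'M[R]_(m, n)) :
  0 < lam ->
  (* (1) U-subproblem *)
  (forall (Ubar : 'M[R]_(m, r)) (V : 'M[R]_(r, n)) (L1 : R), 0 < L1 ->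
     argmin_nonneg (fun U : 'M[R]_(m, r) =>
         frob (grad (fun U' => fobj lam X U' V) Ubar) U
         + L1 * bregman (fun U' => phi1 U' V) U Ubar)
     = [set mx_pos (Ubar - L1^-1 *: (Ubar *m V *m V^T - X *m V^T))]) /\
  (* (2) V-subproblem *)
  (forall (Vbar : 'M[R]_(r, n)) (U : 'M[R]_(m, r)) (L2 : R), 0 < L2 ->
     let G : 'M[R]_(r, n) :=
       (6%:R * lam * fnorm Vbar ^+ 2 + eps lam U) *: Vbar
       - L2^-1 *: (U^T *m U *m Vbar - U^T *m X
                   + (2 * lam) *: (Vbar *m Vbar^T *m Vbar - Vbar)) in
     let a := eps lam U in
     let c := 6%:R * lam * fnorm (mx_pos G) ^+ 2 in
     let Delta := c ^+ 2 + 4%:R / 27%:R * c * a ^+ 3 in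
     let rho := a / 3%:R
                + cbrt ((c + Num.sqrt Delta) / 2 + a ^+ 3 / 27%:R)
                + cbrt ((c - Num.sqrt Delta) / 2 + a ^+ 3 / 27%:R) in
     grad (fun V' => phi2 lam U V') Vbar
       - L2^-1 *: grad (fun V' => fobj lam X U V') Vbar = G /\
     rho ^+ 2 * (rho - a) = c /\
     (forall s : R, s ^+ 2 * (s - a) = c -> s = rho \/ (c = 0 /\ s = 0)) /\
     argmin_nonneg (fun V : 'M[R]_(r, n) =>
         frob (grad (fun V' => fobj lam X U V') Vbar) V
         + L2 * bregman (fun V' => phi2 lam U V') V Vbar)
     = [set rho^-1 *: mx_pos G]).
Proof.
move=> hl; split.
  by move=> Ubar V L1 hL; exact: part1.
move=> Vbar U L2 hL G a c Delta rho.
have hG : grad (fun V' => phi2 lam U V') Vbar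
       - L2^-1 *: grad (fun V' => fobj lam X U V') Vbar = G.
  by rewrite grad_phi2 grad_fobjV.
have ha : 0 < a.
  by rewrite /a /eps lt_max; apply/orP; right; rewrite mulr_gt0.
have hc : 0 <= c.
  by rewrite /c; apply: mulr_ge0; [apply: mulr_ge0; [rewrite ler0n | exact: ltW] | exact: sqr_ge0].
have [hr hrho] : 0 < rho /\ rho ^+ 2 * (rho - a) = c := cardano ha hc.
split; first exact: hG.
split; first exact: hrho.
split.
  by move=> s hs; exact: cubic_uniq ha hc hr hrho hs.
by apply: part2_argmin => //; rewrite hG.
Qed.
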